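(* Let $G$ be a compact Hausdorff topological group, $p\colon E\to B$ a $G$-map of Hausdorff $G$-spaces, and suppose $E$ is $G$-contractible. If either ($B$ is $G$-connected and $E^G\neq\emptyset$) or ($p(E^H)=B^H$ for all closed subgroups $H$ of $G$), then $\mathrm{secat}_G(p)=\mathrm{cat}_G(B)$.
   Context: $X^H=\{x: hx=x\ \forall h\in H\}$; $X$ is $G$-connected if $X^H$ is path-connected for every closed subgroup $H$. A $G$-homotopy is an equivariant homotopy with trivial action on $I$. An invariant set is $G$-categorical if its inclusion is $G$-homotopic to a map into a single orbit; $\mathrm{cat}_G(X)$ is the least number of open $G$-categorical sets covering $X$; $X$ is $G$-contractible if $\mathrm{cat}_G(X)=1$. $\mathrm{secat}_G(p)$ is the least $k$ such that $B$ is covered by $k$ invariant open sets $U_i$ each admitting a $G$-map $s\colon U_i\to E$ with $ps$ $G$-homotopic to the inclusion ($\infty$ if none). *)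

(* Defs.v *)
From HB Require Import structures.
From mathcomp Require Import all_boot all_order all_algebra.
From mathcomp Require Import all_classical all_reals.
From mathcomp Require Import topology Rstruct Rstruct_topology.
From Stdlib Require Import Rdefinitions.
Unset Strict Implicit. Unset Printing Implicit Defensive.
Import Order.TTheory GRing.Theory Num.Theory.
Local Open Scope classical_set_scope.

Definition unitI : set R := `[0%R, 1%R].

Record TopGroup := {
  tg_car :> topologicalType;
  tg_mul : tg_car -> tg_car -> tg_car;
  tg_inv : tg_car -> tg_car;
  tg_one : tg_car;
  tg_mulA : forall x y z, tg_mul x (tg_mul y z) = tg_mul (tg_mul x y) z;
  tg_mul1g : forall x, tg_mul tg_one x = x;
  tg_mulg1 : forall x, tg_mul x tg_one = x;
  tg_mulVg : forall x, tg_mul (tg_inv x) x = tg_one;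
  tg_mulgV : forall x, tg_mul x (tg_inv x) = tg_one;
  tg_mul_cont : continuous (fun p : tg_car * tg_car => tg_mul p.1 p.2);
  tg_inv_cont : continuous tg_inv }.

Arguments tg_mul {t} _ _.
Arguments tg_inv {t} _.

Definition closed_subgroup {G : TopGroup} (H : set G) : Prop :=
  [/\ closed H, H (tg_one G),
      (forall x y, H x -> H y -> H (tg_mul x y)) &
      (forall x, H x -> H (tg_inv x))].

Record GSpace (G : TopGroup) := {
  gs_car :> topologicalType;
  gs_act : G -> gs_car -> gs_car;
  gs_act_cont : continuous (fun p : G * gs_car => gs_act p.1 p.2);
  gs_act1 : forall x, gs_act (tg_one G) x = x;
  gs_actM : forall g h x, gs_act (tg_mul g h) x = gs_act g (gs_act h x) }.

Arguments gs_act {G} g0 _ _.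

Section GTop.
Context {G : TopGroup}.

Definition Gfixset (X : GSpace G) (H : set G) : set X :=
  [set x | forall h, H h -> gs_act X h x = x].

Definition orbit {X : GSpace G} (y : X) : set X :=
  [set gs_act X g y | g in [set: G]].

Definition invariant {X : GSpace G} (U : set X) : Prop :=
  forall g x, U x -> U (gs_act X g x).

Definition Gmap {X Y : GSpace G} (f : X -> Y) : Prop :=
  continuous f /\ forall g x, f (gs_act X g x) = gs_act Y g (f x).

(* A G-map defined on the invariant subset U of X (values off U irrelevant). *)
Definition Gmap_on {X Y : GSpace G} (U : set X) (f : X -> Y) : Prop :=
  {within U, continuous f} /\
  forall g x, U x -> f (gs_act X g x) = gs_act Y g (f x).

Definition path_connected {T : topologicalType} (A : set T) : Prop :=
  forall x y, A x -> A y ->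
    exists f : R -> T, [/\ {within unitI, continuous f},
      f 0%R = x, f 1%R = y & forall t, unitI t -> A (f t)].

Definition G_connected (X : GSpace G) : Prop :=
  forall H : set G, closed_subgroup H -> path_connected (Gfixset X H).

Definition Ghomotopic_on {X Y : GSpace G} (U : set X) (f0 f1 : X -> Y) : Prop :=
  exists F : X -> R -> Y,
    [/\ {within U `*` unitI, continuous (fun p : X * R => F p.1 p.2)},
        (forall x, U x -> F x 0%R = f0 x),
        (forall x, U x -> F x 1%R = f1 x) &
        (forall g x t, U x -> unitI t -> F (gs_act X g x) t = gs_act Y g (F x t))].

Definition G_categorical {X : GSpace G} (U : set X) : Prop :=
  invariant U /\
  exists (f : X -> X) (y0 : X),
    (forall x, U x -> orbit y0 (f x)) /\ Ghomotopic_on U id f.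

(* least natural number satisfying P, or None (= infinity) if there is none *)
Lemma exists_asbool_nat (P : nat -> Prop) : (exists n, P n) -> exists n, asbool (P n).
Proof. by case=> n Pn; exists n; apply/asboolP. Qed.

Definition least_nat (P : nat -> Prop) : option nat :=
  match pselect (exists n, P n) with
  | left h => Some (ex_minn (@exists_asbool_nat P h))
  | right _ => None
  end.

Definition cat_cover (X : GSpace G) (k : nat) : Prop :=
  exists U : 'I_k -> set X,
    (forall i, open (U i) /\ G_categorical (U i)) /\
    forall x, exists i, U i x.

Definition catG (X : GSpace G) : option nat := least_nat (cat_cover X).

Definition G_contractible (X : GSpace G) : Prop := catG X = Some 1%N.

Definition secat_cover {E B : GSpace G} (p : E -> B) (k : nat) : Prop :=
  exists U : 'I_k -> set B,
    (forall i, [/\ open (U i), invariant (U i) &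
       exists s : B -> E, Gmap_on (U i) s /\ Ghomotopic_on (U i) (p \o s) id]) /\
    forall b, exists i, U i b.

Definition secatG {E B : GSpace G} (p : E -> B) : option nat :=
  least_nat (secat_cover p).

End GTop.

(* Main.v *)
From Pilot Require Import Defs.
From mathcomp Require Import all_boot all_classical topology.
From mathcomp Require Import ssralg interval normedtype Rstruct Rstruct_topology.
From Stdlib Require Import Rbase Lra.
Local Open Scope classical_set_scope.
Lemma withinP {T U : topologicalType} (W : set T) (f : T -> U) :
  {within W, continuous f} <-> forall x, W x -> forall V, nbhs (f x) V ->
     \forall y \near x, W y -> V (f y).
Proof.
rewrite (@subspace_continuousP T W U f); split => H x Wx.
  move=> V fV; have := H x Wx V fV; done.
by move=> V fV; apply: H.
Qed.

Lemma within_comp {T U S : topologicalType} (W : set T) (W' : set U)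
  (f : T -> U) (g : U -> S) :
  {within W, continuous f} -> {within W', continuous g} ->
  (forall x, W x -> W' (f x)) -> {within W, continuous (g \o f)}.
Proof.
move=> /withinP cf /withinP cg WW'; apply/withinP => x Wx V gV.
have := cf x Wx _ (cg (f x) (WW' x Wx) V gV).
by apply: filterS => y H Wy; apply: H => //; apply: WW'.
Qed.

Lemma within_cont {T U : topologicalType} (W : set T) (f : T -> U) :
  continuous f -> {within W, continuous f}.
Proof. exact: continuous_subspaceT. Qed.

Lemma within_eq {T U : topologicalType} (W : set T) (f g : T -> U) :
  {within W, continuous f} -> (forall x, W x -> f x = g x) ->
  {within W, continuous g}.
Proof.
move=> /withinP cf e; apply/withinP => x Wx V; rewrite -e // => fV.
by apply: filterS (cf x Wx V fV) => y H Wy; rewrite -e //; apply: H.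
Qed.

Lemma within_sub {T U : topologicalType} (W W' : set T) (f : T -> U) :
  W `<=` W' -> {within W', continuous f} -> {within W, continuous f}.
Proof. by move=> s; apply: continuous_subspaceW. Qed.

Lemma within_pair {T U S : topologicalType} (W : set T) (f : T -> U) (g : T -> S) :
  {within W, continuous f} -> {within W, continuous g} ->
  {within W, continuous (fun x => (f x, g x))}.
Proof.
move=> /withinP cf /withinP cg; apply/withinP => x Wx V [[P Q] /= [nP nQ] PQV].
have h1 := cf x Wx P nP; have h2 := cg x Wx Q nQ.
near=> y => Wy; apply: PQV; split; [apply: (near h1)|apply: (near h2)] => //.
Unshelve. all: by end_near.
Qed.

Lemma fst_cont {T U : topologicalType} : continuous (@fst T U).
Proof.
move=> [x y]; exact: cvg_fst.
Qed.

Lemma snd_cont {T U : topologicalType} : continuous (@snd T U).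
Proof.
move=> [x y]; exact: cvg_snd.
Qed.

Lemma within_pasting {T U : topologicalType} (W A B : set T) (f : T -> U) :
  closed A -> closed B ->
  {within W `&` A, continuous f} -> {within W `&` B, continuous f} ->
  {within W `&` (A `|` B), continuous f}.
Proof.
move=> cA cB /withinP fA /withinP fB; apply/withinP => x [Wx ABx] V fV.
have piece : forall C, closed C -> (forall x, (W `&` C) x -> forall V, nbhs (f x) V ->
     \forall y \near x, (W `&` C) y -> V (f y)) ->
     \forall y \near x, W y -> C y -> V (f y).
  move=> C cC fC; case: (pselect (C x)) => Cx.
    by apply: filterS (fC x (conj Wx Cx) V fV) => y H Wy Cy; apply: H.
  have : open (~` C) by apply: closed_openC.
  move=> oC; have : nbhs x (~` C) by apply: open_nbhs_nbhs; split.
  by apply: filterS => y nC _ Cy.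
have h1 := piece A cA fA; have h2 := piece B cB fB.
near=> y => -[Wy [Ay|By]]; [apply: (near h1)|apply: (near h2)] => //.
Unshelve. all: by end_near.
Qed.

Lemma unitIE (t : R) : unitI t <-> (0 <= t <= 1)%R.
Proof.
rewrite /unitI /= in_itv /=; split.
  by case/andP => /RleP h1 /RleP h2.
by case=> h1 h2; apply/andP; split; apply/RleP.
Qed.

Lemma cont_mul2 : continuous (fun t : R => 2 * t)%R.
Proof. exact: mulrl_continuous. Qed.

Lemma cont_lin (a b : R) : continuous (fun t : R => a * t + b)%R.
Proof.
apply/continuous_subspace_setT.
have := @within_comp _ _ _ setT setT (fun t : R => (a * t, b)%R)
  (fun z : R * R => z.1 + z.2)%R.
apply.
- apply: within_pair; apply: within_cont; [exact: mulrl_continuous|exact: cst_continuous].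
- apply: within_cont; exact: (@pseudometric_normed_Zmodule.add_continuous _ R^o).
- by [].
Qed.

Lemma closed_le_half : closed [set t : R | Rle t (1/2)].
Proof.
have := @closed_le _ (1/2 : R).
congr closed; apply/funext => t; apply/propext; split => /RleP //.
Qed.

Lemma closed_ge_half : closed [set t : R | Rle (1/2) t].
Proof.
have := @closed_ge _ (1/2 : R).
congr closed; apply/funext => t; apply/propext; split => /RleP //.
Qed.

Lemma hausdorff_prod {T U : topologicalType} :
  hausdorff_space T -> hausdorff_space U -> hausdorff_space (T * U)%type.
Proof.
move=> hT hU [p1 p2] [q1 q2] cl.
have c1 : cluster (nbhs p1) q1.
  move=> A B nA nB.
  have := cl (fst @^-1` A) (fst @^-1` B) (fst_cont (p1, p2) A nA)
    (fst_cont (q1, q2) B nB).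
  by case=> -[a b] [/= Aa Ba]; exists a.
have c2 : cluster (nbhs p2) q2.
  move=> A B nA nB.
  have := cl (snd @^-1` A) (snd @^-1` B) (snd_cont (p1, p2) A nA)
    (snd_cont (q1, q2) B nB).
  by case=> -[a b] [/= Aa Ba]; exists b.
by rewrite (hT _ _ c1) (hU _ _ c2).
Qed.

Lemma closed_map_factor {X Y Z : topologicalType} (A : set X) (pi : X -> Y)
  (h : X -> Z) (z0 : Z) :
  compact A -> closed A -> hausdorff_space Y -> continuous pi ->
  {within A, continuous h} ->
  (forall x x', A x -> A x' -> pi x = pi x' -> h x = h x') ->
  exists phi : Y -> Z, (forall x, A x -> phi (pi x) = h x) /\
    {within pi @` A, continuous phi}.
Proof.
move=> cA clA hY cpi ch wd.
pose phi y := match pselect (exists x, A x /\ pi x = y) with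
  | left e => h (proj1_sig (cid e)) | right _ => z0 end.
have phiE : forall x, A x -> phi (pi x) = h x.
  move=> x Ax; rewrite /phi; case: pselect => [e|[]]; last by exists x.
  by case: cid => x' [Ax' e'] /=; apply: wd.
exists phi; split => //; apply/withinP => _ [x Ax <-] V.
rewrite phiE // => nV.
pose O := V°.
have oO : open O by apply: open_interior.
have Ohx : O (h x) by [].
have OV : O `<=` V by apply: interior_subset.
have [V' clV' eV'] : exists2 V', closed V' & V' `&` A = (h @^-1` (~` O)) `&` A.
  apply/closed_subspaceP.
  have := (proj1 (continuous_closedP (from_subspace A h)) ch (~` O)).
  by apply; apply: open_closedC.
pose D := V' `&` A.
have clD : closed D by apply: closedI.
have cD : compact D by apply: (subclosed_compact clD cA) => ? [].
have cpD : closed (pi @` D).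
  apply: compact_closed => //; apply: continuous_compact => //.
  exact: within_cont.
have nD : nbhs (pi x) (~` (pi @` D)).
  apply: open_nbhs_nbhs; split; first exact: closed_openC.
  move=> [x'' Dx'' e]; have : (V' `&` A) x'' by [].
  rewrite eV' => -[/= nO Ax'']; apply: nO.
  by rewrite -(wd x x'') //.
apply: filterS nD => y nDy [x' Ax' ey]; rewrite -ey phiE //.
apply: OV; apply: contrapT => nO; apply: nDy; rewrite -ey.
by exists x' => //; rewrite /D eV'.
Qed.

Section G.
Context {G : TopGroup}.

Lemma act_within {T : topologicalType} (X : GSpace G) (W : set T)
  (a : T -> G) (b : T -> X) :
  {within W, continuous a} -> {within W, continuous b} ->
  {within W, continuous (fun x => gs_act X (a x) (b x))}.
Proof.
move=> ca cb.
have := @within_comp _ _ _ W setT (fun x => (a x, b x))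
  (fun p : G * X => gs_act X p.1 p.2).
apply => //; first exact: within_pair.
apply: within_cont; exact: gs_act_cont.
Qed.

Lemma Ghom_endpoints {X Y : GSpace G} (U : set X) (f0 f1 f0' f1' : X -> Y) :
  Ghomotopic_on U f0 f1 -> (forall x, U x -> f0 x = f0' x) ->
  (forall x, U x -> f1 x = f1' x) -> Ghomotopic_on U f0' f1'.
Proof.
move=> [F [cF F0 F1 eF]] e0 e1; exists F; split => // x Ux.
  by rewrite -e0 //; apply: F0.
by rewrite -e1 //; apply: F1.
Qed.

Lemma unitI_aff (a b t : R) : unitI t -> (0 <= a * t + b <= 1)%R ->
  unitI (a * t + b)%R.
Proof. by move=> _ /unitIE. Qed.

Lemma within_reparam {X Y : GSpace G} (U : set X) (F : X -> R -> Y) (a b : R)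
  (W : set (X * R)) :
  {within U `*` unitI, continuous (fun p : X * R => F p.1 p.2)} ->
  (forall p, W p -> (U `*` unitI) (p.1, a * p.2 + b)%R) ->
  {within W, continuous (fun p : X * R => F p.1 (a * p.2 + b)%R)}.
Proof.
move=> cF WU.
have := @within_comp _ _ _ W (U `*` unitI) (fun p : X * R => (p.1, a * p.2 + b)%R)
  (fun p : X * R => F p.1 p.2).
apply => //; apply: within_pair; apply: within_cont; first exact: fst_cont.
have := @within_comp _ _ _ setT setT (@snd X R) (fun t : R => a * t + b)%R.
move=> h; apply/continuous_subspace_setT; apply: h => //.
  by apply: within_cont; exact: snd_cont.
by apply: within_cont; exact: cont_lin.
Qed.

Lemma Ghom_sym {X Y : GSpace G} (U : set X) (f0 f1 : X -> Y) :
  Ghomotopic_on U f0 f1 -> Ghomotopic_on U f1 f0.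
Proof.
move=> [F [cF F0 F1 eF]].
exists (fun x t => F x (-1 * t + 1)%R); split.
- apply: within_reparam cF _ => -[x t] [/= Ux /unitIE It]; split => //.
  by apply/unitIE; lra.
- by move=> x Ux; rewrite /= (_ : (-1 * 0 + 1 = 1)%R) ?F1 //; lra.
- by move=> x Ux; rewrite /= (_ : (-1 * 1 + 1 = 0)%R) ?F0 //; lra.
- move=> g x t Ux /unitIE It; apply: eF => //; apply/unitIE; lra.
Qed.


Lemma closed_snd {X : topologicalType} (C : set R) : closed C ->
  closed [set p : X * R | C p.2].
Proof. move=> cC; apply: (@preimage_closed _ _ snd C) => // x _; exact: snd_cont. Qed.

Lemma Ghom_trans {X Y : GSpace G} (U : set X) (f0 f1 f2 : X -> Y) :
  Ghomotopic_on U f0 f1 -> Ghomotopic_on U f1 f2 -> Ghomotopic_on U f0 f2.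
Proof.
move=> [F [cF F0 F1 eF]] [F' [cF' F0' F1' eF']].
pose L x t := if Rle_dec t (1/2) then F x (2 * t + 0)%R else F' x (2 * t + -1)%R.
exists L; split.
- have -> : U `*` unitI = (U `*` unitI) `&`
      ([set p : X * R | Rle p.2 (1/2)] `|` [set p : X * R | Rle (1/2) p.2]).
    apply/funext => -[x t]; apply/propext; split => [h|[]//]; split => //=.
    by case: (Rle_dec t (1/2)) => h'; [left|right; lra].
  apply: within_pasting; [exact: closed_snd closed_le_half|
                          exact: closed_snd closed_ge_half| |].
  + apply: (@within_eq _ _ _ (fun p : X * R => F p.1 (2 * p.2 + 0)%R)).
      apply: within_reparam cF _ => -[x t] [[/= Ux /unitIE It] h].
      by split => //; apply/unitIE; simpl in h; lra.
    move=> [x t] [_ /= h]; rewrite /L; case: Rle_dec => //.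
  + apply: (@within_eq _ _ _ (fun p : X * R => F' p.1 (2 * p.2 + -1)%R)).
      apply: within_reparam cF' _ => -[x t] [[/= Ux /unitIE It] h].
      by split => //; apply/unitIE; simpl in h; lra.
    move=> [x t] [[/= Ux _] h]; rewrite /L; case: Rle_dec => // h' /=.
    have et : t = (1/2)%R by lra.
    clear h'; subst t.
    rewrite (_ : (2 * (1/2) + 0 = 1)%R); last by lra.
    rewrite (_ : (2 * (1/2) + -1 = 0)%R); last by lra.
    by rewrite F1 // F0'.
- move=> x Ux; rewrite /L; case: Rle_dec => h; last by lra.
  by rewrite (_ : (2 * 0 + 0 = 0)%R) ?F0 //; lra.
- move=> x Ux; rewrite /L; case: Rle_dec => h; first by lra.
  by rewrite (_ : (2 * 1 + -1 = 1)%R) ?F1' //; lra.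
- move=> g x t Ux /unitIE It; rewrite /L; case: Rle_dec => h.
    by apply: eF => //; apply/unitIE; lra.
  by apply: eF' => //; apply/unitIE; lra.
Qed.


Lemma unitI_compact : compact unitI.
Proof.
have H := @segment_compact _ (0 : R)%R (1 : R)%R. exact: H.
Qed.

Lemma unitI_closed : closed unitI.
Proof. apply: compact_closed => //; [exact: Rhausdorff | exact: unitI_compact]. Qed.

Lemma mulVK (g h : G) : tg_mul (tg_inv g) (tg_mul g h) = h.
Proof. by rewrite tg_mulA tg_mulVg tg_mul1g. Qed.

Lemma actVK (X : GSpace G) (g : G) (x : X) : gs_act X (tg_inv g) (gs_act X g x) = x.
Proof. by rewrite -gs_actM tg_mulVg gs_act1. Qed.

Definition stab (X : GSpace G) (y : X) : set G := [set g | gs_act X g y = y].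

Lemma orbit_cont (X : GSpace G) (y : X) : continuous (fun g : G => gs_act X g y).
Proof.
apply/continuous_subspace_setT.
have := @act_within G X setT id (fun _ => y).
apply; apply: within_cont => x; [exact: cvg_id | exact: cvg_cst].
Qed.

Lemma stab_closed_subgroup (X : GSpace G) (y : X) : hausdorff_space X ->
  closed_subgroup (stab X y).
Proof.
move=> hX; split.
- apply: (@preimage_closed _ _ (fun g : G => gs_act X g y) [set y]).
    by move=> g _; apply: orbit_cont.
  by apply: accessible_closed_set1; apply: hausdorff_accessible.
- by rewrite /stab /= gs_act1.
- by move=> a b ha hb; rewrite /stab /= gs_actM hb ha.
- by move=> a; rewrite /stab /= => h; rewrite -{1}h actVK.
Qed.

Lemma stab_wd (X Y : GSpace G) (y : X) (z : Y) :
  (forall h, stab X y h -> gs_act Y h z = z) ->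
  forall g g', gs_act X g y = gs_act X g' y -> gs_act Y g z = gs_act Y g' z.
Proof.
move=> hs g g' e.
have : stab X y (tg_mul (tg_inv g') g).
  by rewrite /stab /= gs_actM e actVK.
move=> /hs; rewrite gs_actM => e2.
by have := congr1 (gs_act Y g') e2; rewrite -gs_actM tg_mulgV gs_act1.
Qed.

Lemma least_nat_some (P : nat -> Prop) n : least_nat P = Some n -> P n.
Proof.
rewrite /least_nat; case: pselect => // h [<-].
by case: ex_minnP => m /asboolP.
Qed.


Lemma Gmap_on_cont {X Y : GSpace G} (U : set X) (s : X -> Y) :
  Gmap_on U s -> {within U, continuous s}.
Proof. by case. Qed.

Lemma Ghom_map {E B : GSpace G} (U : set B) (s : B -> E) (p : E -> B)
  (fE : E -> E) :
  Ghomotopic_on setT id fE -> Gmap_on U s -> Gmap p ->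
  Ghomotopic_on U (fun x => p (s x)) (fun x => p (fE (s x))).
Proof.
move=> [H [cH H0 H1 eH]] [cs es] [cp ep].
exists (fun x t => p (H (s x) t)); split.
- have := @within_comp _ _ _ (U `*` unitI) (setT `*` unitI)
    (fun q : B * R => (s q.1, q.2)) (fun q : E * R => p (H q.1 q.2)).
  apply.
  + apply: within_pair.
      have := @within_comp _ _ _ (U `*` unitI) U fst s; apply => //.
        by apply: within_cont; exact: fst_cont.
      by move=> x [].
    by apply: within_cont; exact: snd_cont.
  + have := @within_comp _ _ _ (setT `*` unitI) setT
      (fun q : E * R => H q.1 q.2) p; apply => //.
    by apply: within_cont.
  + by move=> [x t] [_ It].
- by move=> x Ux; rewrite H0.
- by move=> x Ux; rewrite H1.
- by move=> g x t Ux It; rewrite es // eH // ep.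
Qed.

Lemma secat_to_cat {E B : GSpace G} (p : E -> B) (k : nat) :
  Gmap p -> G_contractible E -> secat_cover p k -> cat_cover B k.
Proof.
move=> pG /least_nat_some [U0 [hU0 covU0]] [U [hU covU]].
case: (hU0 ord0) => _ [_ [fE [e0 [orbE HE]]]].
have U0T : U0 ord0 = setT.
  apply/funext => x; apply/propext; split => // _.
  by case: (covU0 x) => i; rewrite (ord1 i).
rewrite U0T in orbE HE.
exists U; split => // i; case: (hU i) => oU iU [s [sG hs]]; split => //.
split => //.
exists (fun x => p (fE (s x))), (p e0); split.
  move=> x Ux; case: (orbE (s x) I) => g _ eg.
  by exists g => //; rewrite -eg; case: pG => _ ->.
apply: (@Ghom_trans B B (U i) _ (fun x => p (s x))).
  by apply: Ghom_sym.
exact: Ghom_map HE sG pG.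
Qed.


Lemma Ghom_end_cont {X Y : GSpace G} (U : set X) (f0 f1 : X -> Y) :
  Ghomotopic_on U f0 f1 -> {within U, continuous f1}.
Proof.
move=> [K [cK K0 K1 eK]].
apply: (@within_eq _ _ _ (fun x => K x 1%R)); last by move=> x Ux; rewrite K1.
have := @within_comp _ _ _ U (U `*` unitI) (fun x => (x, 1%R))
  (fun q : X * R => K q.1 q.2); apply => //.
  apply: within_pair; apply: within_cont => x; [exact: cvg_id|exact: cvg_cst].
move=> x Ux; split => //; apply/unitIE. simpl; lra.
Qed.

Lemma Ghom_end_eqv {X Y : GSpace G} (U : set X) (f0 f1 : X -> Y) :
  Pilot.Defs.invariant U -> Ghomotopic_on U f0 f1 ->
  forall g x, U x -> f1 (gs_act X g x) = gs_act Y g (f1 x).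
Proof.
move=> iU [K [cK K0 K1 eK]] g x Ux.
rewrite -K1 ?eK ?K1 //; last exact: iU.
by apply/unitIE; lra.
Qed.


Lemma cat_to_secat {E B : GSpace G} (p : E -> B) (k : nat) :
  compact [set: G] -> hausdorff_space B -> Gmap p ->
  ((G_connected B /\ Gfixset E [set: G] !=set0) \/
   (forall H : set G, closed_subgroup H -> p @` Gfixset E H = Gfixset B H)) ->
  cat_cover B k -> secat_cover p k.
Proof.
move=> cG hB [cp ep] hyp [U [hU covU]]; exists U; split => // i.
case: (hU i) => oU [iU [f [y0 [orbf K]]]].
split => //.
have cf := @Ghom_end_cont _ _ _ _ _ K.
have ef := @Ghom_end_eqv _ _ _ _ _ iU K.
have Sc := stab_closed_subgroup B y0 hB.
case: hyp => [[Gc [es Fes]] | hsurj].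
- have Fb : forall g, gs_act B g (p es) = p es.
    by move=> g; rewrite -ep Fes.
  have [gam [cgam g0 g1 gS]] := Gc _ Sc y0 (p es) (fun h => id) (fun h _ => Fb h).
  pose A := [set: G] `*` unitI.
  have cA : compact A by apply: compact_setX => //; exact: unitI_compact.
  have clA : closed A.
    have -> : A = [set q : G * R | unitI q.2].
      by apply/funext => q; apply/propext; split => [[]|] //.
    exact: closed_snd unitI_closed.
  have hBR : hausdorff_space (B * R)%type.
    by apply: hausdorff_prod => //; exact: Rhausdorff.
  have cpi : continuous (fun q : G * R => (gs_act B q.1 y0, q.2)).
    apply/continuous_subspace_setT; apply: within_pair.
      have := @within_comp _ _ _ setT setT fst (fun g => gs_act B g y0).
      apply => //; apply: within_cont; [exact: fst_cont|exact: orbit_cont].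
    by apply: within_cont; exact: snd_cont.
  have ch : {within A, continuous (fun q : G * R => gs_act B q.1 (gam q.2))}.
    apply: act_within; first by apply: within_cont; exact: fst_cont.
    have := @within_comp _ _ _ A unitI snd gam; apply => //.
      by apply: within_cont; exact: snd_cont.
    by move=> q [].
  have wd : forall q q', A q -> A q' ->
      (gs_act B q.1 y0, q.2) = (gs_act B q'.1 y0, q'.2) ->
      gs_act B q.1 (gam q.2) = gs_act B q'.1 (gam q'.2).
    move=> [g t] [g' t'] _ [_ It'] [/= e1 et]; subst t'.
    exact: (@stab_wd B B y0 (gam t) (gS t It') g g' e1).
  have [phi [phiE cphi]] := @closed_map_factor _ _ _ A _ _ y0 cA clA hBR cpi ch wd.
  pose P x t := phi (f x, t).
  have PH : Ghomotopic_on (U i) f (fun _ => p es).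
    exists P; split.
    + have := @within_comp _ _ _ (U i `*` unitI)
        ((fun q : G * R => (gs_act B q.1 y0, q.2)) @` A)
        (fun q : B * R => (f q.1, q.2)) phi; apply => //.
        apply: within_pair; last by apply: within_cont; exact: snd_cont.
        have := @within_comp _ _ _ (U i `*` unitI) (U i) fst f; apply => //.
          by apply: within_cont; exact: fst_cont.
        by move=> q [].
      move=> [x t] [/= Ux It]; case: (orbf x Ux) => h _ eh.
      by exists (h, t) => //=; rewrite eh.
    + move=> x Ux; rewrite /P; case: (orbf x Ux) => h _ <-.
      rewrite (phiE (h, 0%R)) /=; first by congr (gs_act B h _); exact: g0.
      by split => //; apply/unitIE; simpl; lra.
    + move=> x Ux; rewrite /P; case: (orbf x Ux) => h _ <-.
      rewrite (phiE (h, 1%R)) /=; last by split => //; apply/unitIE; simpl; lra.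
      by rewrite (_ : gam 1%R = p es) ?Fb //; exact: g1.
    + move=> g x t Ux It; rewrite /P ef //; case: (orbf x Ux) => h _ <-.
      rewrite -gs_actM (phiE (tg_mul g h, t)) // (phiE (h, t)) //=.
      by rewrite gs_actM.
  exists (fun _ => es); split; [split|].
  + by apply: within_cont => x; exact: cvg_cst.
  + by move=> g x _; rewrite Fes.
  + have K' := @Ghom_sym _ _ _ _ _ K.
    have PH' := @Ghom_sym _ _ _ _ _ PH.
    exact: (@Ghom_trans _ _ _ _ _ _ PH' K').
- have : Gfixset B (stab B y0) y0 by move=> h.
  rewrite -(hsurj _ Sc) => -[e Fe pe].
  have [phi [phiE cphi]] := @closed_map_factor G B E setT
    (fun g => gs_act B g y0) (fun g => gs_act E g e) e cG closedT hB
    (orbit_cont B y0) (@within_cont _ _ setT _ (orbit_cont E e))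
    (fun g g' _ _ => @stab_wd B E y0 e Fe g g').
  exists (fun x => phi (f x)); split; [split|].
  + have := @within_comp _ _ _ (U i) ((fun g => gs_act B g y0) @` setT) f phi.
    by apply => // x Ux; exact: orbf.
  + move=> g x Ux; rewrite ef //; case: (orbf x Ux) => h _ <-.
    by rewrite -gs_actM !phiE // gs_actM.
  + have K' := @Ghom_sym _ _ _ _ _ K.
    apply: (@Ghom_endpoints _ _ _ _ _ _ _ K') => // x Ux /=.
    case: (orbf x Ux) => h _ <-.
    by rewrite phiE // ep pe.
Qed.

End G.

Theorem corollary4p7 (G : TopGroup) (E B : GSpace G) (p : E -> B) :
  compact [set: G] -> hausdorff_space G ->
  hausdorff_space E -> hausdorff_space B ->
  Gmap p ->
  G_contractible E ->
  ((G_connected B /\ Gfixset E [set: G] !=set0) \/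
   (forall H : set G, closed_subgroup H -> p @` Gfixset E H = Gfixset B H)) ->
  secatG p = catG B.
Proof.
move=> cG hG hE hB pG cE hyp.
have e : secat_cover p = cat_cover B.
  apply/funext => k; apply/propext; split.
  - exact: secat_to_cat pG cE.
  - exact: cat_to_secat cG hB pG hyp.
by rewrite /secatG /catG e.
Qed.
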